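(* There is an absolute constant $c>0$ such that the following holds. Let $n_1,n_2,n_3\in\mathbb{Z}\setminus\{0\}$ with $|n_1|\ge|n_2|\ge|n_3|$ and set $n=n_1+n_2+n_3$. Then at least one of the following is true: (I) (resonance) $n_i=n$ for some $1\le i\le3$; (II) $|n_3|\ge c|n_1|$; (III) $|\Phi_3(n_1,n_2,n_3)|=|n^5-n_1^5-n_2^5-n_3^5|\ge c\,n_1^4$.
   Context: $\Phi_3(n_1,n_2,n_3)=n^5-n_1^5-n_2^5-n_3^5$ where $n=n_1+n_2+n_3$. The paper writes the alternatives with $\gtrsim$, meaning inequalities up to an absolute implicit constant. *)

(* Defs.v *)
From Stdlib Require Import Reals ZArith.
Open Scope Z_scope.
Definition Phi3 (n1 n2 n3 : Z) : Z :=
  let n := n1 + n2 + n3 in n ^ 5 - n1 ^ 5 - n2 ^ 5 - n3 ^ 5.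

(* Main.v *)
Require Import Defs.
From Stdlib Require Import Reals ZArith Lia Psatz Lra.

Lemma phi_fact a b c : Phi3 a b c =
  5 * (a+b) * (b+c) * (a+c) * (a*a+b*b+c*c+a*b+b*c+a*c).
Proof. unfold Phi3. ring. Qed.

Lemma keyZ n1 n2 n3 : n1 <> 0 -> n2 <> 0 -> n3 <> 0 ->
  Z.abs n1 >= Z.abs n2 -> Z.abs n2 >= Z.abs n3 ->
  n1+n2 <> 0 -> n2+n3 <> 0 -> n1+n3 <> 0 -> 4 * Z.abs n3 < Z.abs n1 ->
  n1^4 <= 4 * Z.abs (Phi3 n1 n2 n3).
Proof.
  intros H1 H2 H3 H12 H23 A0 B0 C0 Hc.
  rewrite phi_fact.
  set (Q := n1*n1+n2*n2+n3*n3+n1*n2+n2*n3+n1*n3).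
  assert (EQ : 2*Q - n1*n1 = (n1+n2+n3)*(n1+n2+n3) + n2*n2 + n3*n3) by (unfold Q; ring).
  pose proof (Z.square_nonneg (n1+n2+n3)). pose proof (Z.square_nonneg n2).
  pose proof (Z.square_nonneg n3). pose proof (Z.square_nonneg n1).
  assert (HQ : n1*n1 <= 2*Q) by lia.
  set (m := Z.abs n1).
  assert (Em : m*m = n1*n1) by (unfold m; destruct (Z.abs_spec n1) as [[_ E]|[_ E]]; rewrite E; ring).
  assert (Hm : n1^4 = m*m*(m*m)) by (rewrite Em; ring).
  assert (HQ' : m*m <= 2*Q) by lia.
  assert (0 <= Q) by lia.
  set (A := Z.abs (n1+n2)). set (B := Z.abs (n2+n3)). set (C := Z.abs (n1+n3)).
  assert (A >= 1) by (unfold A; lia).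
  assert (B >= 1) by (unfold B; lia).
  assert (HAB : 3*m <= 4*(A+B)) by (unfold A,B,m; lia).
  assert (HC : 3*m <= 4*C) by (unfold C,m; lia).
  assert (Hp : 0 <= (A-1)*(B-1)) by (apply Z.mul_nonneg_nonneg; lia).
  assert (Ep : (A-1)*(B-1) = A*B - A - B + 1) by ring.
  assert (HAB2 : 3*m <= 8*(A*B)) by lia.
  assert (E : Z.abs (5 * (n1+n2) * (n2+n3) * (n1+n3) * Q) = 5*(A*B)*C*Q).
  { unfold A,B,C. rewrite !Z.abs_mul. rewrite (Z.abs_eq Q) by lia. change (Z.abs 5) with 5. ring. }
  rewrite E, Hm.
  assert (0 <= m) by (unfold m; lia).
  assert (P1 : (3*m)*(3*m) <= (8*(A*B))*(4*C)) by (apply Z.mul_le_mono_nonneg; lia).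
  assert (P2 : ((3*m)*(3*m))*(m*m) <= ((8*(A*B))*(4*C))*(2*Q)).
  { apply Z.mul_le_mono_nonneg; lia. }
  assert (X0 : 0 <= A*B*C*Q).
  { repeat apply Z.mul_nonneg_nonneg; lia. }
  assert (F1 : ((3*m)*(3*m))*(m*m) = 9*(m*m*(m*m))) by ring.
  assert (F2 : ((8*(A*B))*(4*C))*(2*Q) = 64*(A*B*C*Q)) by ring.
  assert (F3 : 4*(5*(A*B)*C*Q) = 20*(A*B*C*Q)) by ring.
  rewrite F3. rewrite F1, F2 in P2.
  generalize dependent (m*m*(m*m)). generalize dependent (A*B*C*Q). intros. lia.
Qed.

Theorem proposition3p1 :
  exists c : R, (0 < c)%R /\
    forall n1 n2 n3 : Z,
      n1 <> 0%Z -> n2 <> 0%Z -> n3 <> 0%Z ->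
      (Z.abs n1 >= Z.abs n2)%Z -> (Z.abs n2 >= Z.abs n3)%Z ->
      let n := (n1 + n2 + n3)%Z in
      (n1 = n \/ n2 = n \/ n3 = n) \/
      (IZR (Z.abs n3) >= c * IZR (Z.abs n1))%R \/
      (IZR (Z.abs (Phi3 n1 n2 n3)) >= c * IZR (n1 ^ 4))%R.
Proof.
  exists (1/4)%R. split; [lra|].
  intros n1 n2 n3 H1 H2 H3 H12 H23 n. unfold n.
  destruct (Z.eq_dec (n2+n3) 0). { left; left; lia. }
  destruct (Z.eq_dec (n1+n3) 0). { left; right; left; lia. }
  destruct (Z.eq_dec (n1+n2) 0). { left; right; right; lia. }
  destruct (Z_lt_le_dec (4 * Z.abs n3) (Z.abs n1)) as [h|h].
  - right; right. pose proof (keyZ n1 n2 n3 H1 H2 H3 H12 H23 n5 n0 n4 h) as K.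
    apply IZR_le in K. rewrite mult_IZR in K. lra.
  - right; left. apply IZR_le in h. rewrite mult_IZR in h. lra.
Qed.
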